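(* Consider the airfoil system $\ddot x_1+2G^1(x,\dot x)=0$, $\ddot x_2+2G^2(x,\dot x)=0$ with $y_i=\dot x_i$, $$G^1=\frac{6V^2M^2x_2^3-6000Mx_2^3+30V^2x_2+30V^2y_1+19V^2y_2+240VMy_1-60VMy_2+1200Mx_1-300Mx_2}{2100V^2M},$$ $$G^2=-\frac{18V^2M^2x_2^3-60000Mx_2^3+90V^2x_2+90V^2y_1+85V^2y_2+300VMy_1-600VMy_2+1500Mx_1-3000Mx_2}{5250V^2M},$$ where $M=M_\infty>0$ and $V>0$ are real parameters. Define $R_1=-9450V^2M-43V^2+135VM+621900M^2$, $R_2=1800V^4M+1500V^3M^2-15660000V^2M^3+4V^4+20V^3M-123675V^2M^2+297000VM^3+769590000M^4$, $R_3=-V^2+50M$, $R_4=V^2M-5000$, $R_5=-18900V^4M^2+43V^4M-135V^3M^2+795600V^2M^3+47250000V^2M-215000V^2+675000VM-1615500000M^2$, $R_6=3600V^6M^2+3000V^5M^3-31320000V^4M^4-4V^6M-20V^5M^2-146325V^4M^3-522000V^3M^4+1579410000V^2M^5-4500000V^4M-532500000V^3M^2+155250000000V^2M^3+20000V^4+100000V^3M+56625000V^2M^2+28485000000VM^3-7829550000000M^4$, and assume the genericity condition $(M-10)R_1R_2R_3R_4R_5R_6\neq0$. Then: (a) the system has exactly one Jacobi stable fixed point if and only if one of the following holds: (i) $R_1>0,R_2>0,R_4>0,R_5>0,R_6>0$; (ii) $R_1>0,R_2>0,R_3>0,R_4<0$; (iii) $R_1>0,R_2>0,R_3>0,R_4>0,R_5<0,R_6>0$;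 (b) the system has exactly two Jacobi stable fixed points if and only if one of the following holds: (i) $R_1<0,R_3<0,R_4<0,R_5>0,R_6>0$; (ii) $R_1>0,R_2<0,R_3<0,R_4<0,R_5>0,R_6>0$.
   Context: This is the dimensionless aeroelastic airfoil model with cubic pitching nonlinearity in supersonic flow ($x_1$ plunge, $x_2$ pitch, $M_\infty$ the flight Mach number, $V$ a dimensionless velocity), after fixing the remaining airfoil constants. Fixed points are points $(x_1,x_2)\in\mathbb{R}^2$ with $G^1(x,0)=G^2(x,0)=0$. Einstein summation is used; $N^i_j=\partial G^i/\partial y_j$, $G^i_{j\ell}=\partial N^i_j/\partial y_\ell$, and the deviation curvature tensor is $P^i_j=-2\frac{\partial G^i}{\partial x_j}-2G^\ell G^i_{j\ell}+y_\ell\frac{\partial N^i_j}{\partial x_\ell}+N^i_\ell N^\ell_j$. A fixed point $\bar x$ is Jacobi stable if all eigenvalues of the $2\times 2$ matrix $(P^i_j)$ evaluated at $(x,y)=(\bar x,0)$ have strictly negative real parts. *)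

(* Defs.v *)
From Stdlib Require Import Reals.
From Coquelicot Require Import Coquelicot.
Open Scope R_scope.

(* Points of R^2; index 0 stands for coordinate 1, index 1 for coordinate 2. *)
Definition vec := (R * R)%type.
Definition vget (v : vec) (i : nat) : R := if Nat.eqb i 0 then fst v else snd v.
Definition vset (v : vec) (i : nat) (t : R) : vec :=
  if Nat.eqb i 0 then (t, snd v) else (fst v, t).

Definition sum2 (f : nat -> R) : R := f 0%nat + f 1%nat.

Definition G1 (M V : R) (x y : vec) : R :=
  let x1 := fst x in let x2 := snd x in let y1 := fst y in let y2 := snd y in
  (6*V^2*M^2*x2^3 - 6000*M*x2^3 + 30*V^2*x2 + 30*V^2*y1 + 19*V^2*y2
   + 240*V*M*y1 - 60*V*M*y2 + 1200*M*x1 - 300*M*x2) / (2100*V^2*M).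

Definition G2 (M V : R) (x y : vec) : R :=
  let x1 := fst x in let x2 := snd x in let y1 := fst y in let y2 := snd y in
  - ((18*V^2*M^2*x2^3 - 60000*M*x2^3 + 90*V^2*x2 + 90*V^2*y1 + 85*V^2*y2
      + 300*V*M*y1 - 600*V*M*y2 + 1500*M*x1 - 3000*M*x2) / (5250*V^2*M)).

Definition G (M V : R) (i : nat) (x y : vec) : R :=
  if Nat.eqb i 0 then G1 M V x y else G2 M V x y.

Definition dx (f : vec -> vec -> R) (j : nat) (x y : vec) : R :=
  Derive (fun t => f (vset x j t) y) (vget x j).
Definition dy (f : vec -> vec -> R) (j : nat) (x y : vec) : R :=
  Derive (fun t => f x (vset y j t)) (vget y j).

Definition N (M V : R) (i j : nat) (x y : vec) : R := dy (G M V i) j x y.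
Definition G3 (M V : R) (i j l : nat) (x y : vec) : R := dy (N M V i j) l x y.

Definition P (M V : R) (i j : nat) (x y : vec) : R :=
  - 2 * dx (G M V i) j x y
  - 2 * sum2 (fun l => G M V l x y * G3 M V i j l x y)
  + sum2 (fun l => vget y l * dx (N M V i j) l x y)
  + sum2 (fun l => N M V i l x y * N M V l j x y).

Definition fixed_point (M V : R) (x : vec) : Prop :=
  G M V 0 x (0, 0) = 0 /\ G M V 1 x (0, 0) = 0.

Definition eigenvalue2 (A : nat -> nat -> R) (lam : C) : Prop :=
  ((RtoC (A 0%nat 0%nat) - lam) * (RtoC (A 1%nat 1%nat) - lam)
   - RtoC (A 0%nat 1%nat) * RtoC (A 1%nat 0%nat))%C = RtoC 0.

Definition jacobi_stable (M V : R) (xb : vec) : Prop :=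
  forall lam : C, eigenvalue2 (fun i j => P M V i j xb (0, 0)) lam -> Re lam < 0.

Definition jacobi_stable_fp (M V : R) (x : vec) : Prop :=
  fixed_point M V x /\ jacobi_stable M V x.

Definition exactly_one (Q : vec -> Prop) : Prop :=
  exists a, Q a /\ forall b, Q b -> b = a.
Definition exactly_two (Q : vec -> Prop) : Prop :=
  exists a b, a <> b /\ Q a /\ Q b /\ forall c, Q c -> c = a \/ c = b.

Definition Rpoly1 (M V : R) := -9450*V^2*M - 43*V^2 + 135*V*M + 621900*M^2.
Definition Rpoly2 (M V : R) := 1800*V^4*M + 1500*V^3*M^2 - 15660000*V^2*M^3 + 4*V^4
  + 20*V^3*M - 123675*V^2*M^2 + 297000*V*M^3 + 769590000*M^4.
Definition Rpoly3 (M V : R) := - V^2 + 50*M.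
Definition Rpoly4 (M V : R) := V^2*M - 5000.
Definition Rpoly5 (M V : R) := -18900*V^4*M^2 + 43*V^4*M - 135*V^3*M^2 + 795600*V^2*M^3
  + 47250000*V^2*M - 215000*V^2 + 675000*V*M - 1615500000*M^2.
Definition Rpoly6 (M V : R) := 3600*V^6*M^2 + 3000*V^5*M^3 - 31320000*V^4*M^4 - 4*V^6*M
  - 20*V^5*M^2 - 146325*V^4*M^3 - 522000*V^3*M^4 + 1579410000*V^2*M^5
  - 4500000*V^4*M - 532500000*V^3*M^2 + 155250000000*V^2*M^3 + 20000*V^4
  + 100000*V^3*M + 56625000*V^2*M^2 + 28485000000*V*M^3 - 7829550000000*M^4.

(* Main.v *)
Require Import Defs.
From Stdlib Require Import Reals.
From Coquelicot Require Import Coquelicot.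
From Stdlib Require Import Lra Psatz Classical Setoid.
Open Scope R_scope.

Definition nn (M V : R) (i j : nat) : R :=
  match i, j with
  | O, O => (30*V^2 + 240*V*M) / (2100*V^2*M)
  | O, _ => (19*V^2 - 60*V*M) / (2100*V^2*M)
  | _, O => - ((90*V^2 + 300*V*M) / (5250*V^2*M))
  | _, _ => - ((85*V^2 - 600*V*M) / (5250*V^2*M))
  end.

Definition gg (M V : R) (i j : nat) (x2 : R) : R :=
  match i, j with
  | O, O => 1200*M / (2100*V^2*M)
  | O, _ => (18*V^2*M^2*x2^2 - 18000*M*x2^2 + 30*V^2 - 300*M) / (2100*V^2*M)
  | _, O => - (1500*M / (5250*V^2*M))
  | _, _ => - ((54*V^2*M^2*x2^2 - 180000*M*x2^2 + 90*V^2 - 3000*M) / (5250*V^2*M))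
  end.

Section S.
Variables (M V : R) (hM : 0 < M) (hV : 0 < V).

Lemma N_eq i j x y : Defs.N M V i j x y = nn M V i j.
Proof.
  unfold Defs.N, dy, Defs.G, vset, vget.
  destruct x as [x1 x2]; destruct y as [y1 y2].
  destruct i as [|i]; destruct j as [|j]; simpl;
  apply is_derive_unique; unfold G1, G2; simpl;
  auto_derive; try (split; [|auto]); try (apply Rgt_not_eq || idtac);
  try field; try (repeat split; nra).
Qed.

Lemma G3_eq i j l x y : G3 M V i j l x y = 0.
Proof.
  unfold G3, dy.
  rewrite (Derive_ext _ (fun _ => nn M V i j)).
  - apply Derive_const.
  - intros t. apply N_eq.
Qed.

Lemma dxN_eq i j l x y : dx (Defs.N M V i j) l x y = 0.
Proof.
  unfold dx.
  rewrite (Derive_ext _ (fun _ => nn M V i j)).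
  - apply Derive_const.
  - intros t. apply N_eq.
Qed.

Lemma dxG_eq i j x1 x2 : dx (Defs.G M V i) j (x1, x2) (0, 0) = gg M V i j x2.
Proof.
  unfold dx, Defs.G, vset, vget.
  destruct i as [|i]; destruct j as [|j]; simpl;
  apply is_derive_unique; unfold G1, G2; simpl;
  auto_derive; try (split; [|auto]); try (apply Rgt_not_eq || idtac);
  try field; try (repeat split; nra).
Qed.

Lemma P_eq i j x1 x2 : Defs.P M V i j (x1, x2) (0, 0) =
  -2 * gg M V i j x2 + (nn M V i 0 * nn M V 0 j + nn M V i 1 * nn M V 1 j).
Proof.
  unfold Defs.P, sum2. rewrite !G3_eq, !dxN_eq, !N_eq, dxG_eq. ring.
Qed.
End S.

Lemma eig_comp (A : nat -> nat -> R) (x y : R) :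
  eigenvalue2 A (x, y) <->
  ((A 0%nat 0%nat - x) * (A 1%nat 1%nat - x) - y * y - A 0%nat 1%nat * A 1%nat 0%nat = 0 /\
   - (y * (A 0%nat 0%nat - x)) - y * (A 1%nat 1%nat - x) = 0).
Proof.
  unfold eigenvalue2, Cminus, Cmult, Cplus, Copp, RtoC; simpl.
  split.
  - intros H. injection H as H1 H2. split; lra.
  - intros [H1 H2]. f_equal; lra.
Qed.

Lemma stable_iff (A : nat -> nat -> R) :
  (forall lam : C, eigenvalue2 A lam -> Re lam < 0) <->
  (A 0%nat 0%nat + A 1%nat 1%nat < 0 /\
   A 0%nat 0%nat * A 1%nat 1%nat - A 0%nat 1%nat * A 1%nat 0%nat > 0).
Proof.
  set (a := A 0%nat 0%nat); set (b := A 0%nat 1%nat); set (c := A 1%nat 0%nat); set (d := A 1%nat 1%nat).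
  split.
  - intros H.
    destruct (Rlt_dec (a + d) 0) as [Ht|Ht];
    destruct (Rlt_dec 0 (a*d - b*c)) as [Hd|Hd]; try (split; lra).
    + exfalso.
      set (disc := (a+d)^2 - 4*(a*d-b*c)). assert (Hdef: disc = (a+d)^2 - 4*(a*d-b*c)) by reflexivity. clearbody disc.
      assert (Hdisc : 0 <= disc) by (nra).
      pose proof (sqrt_sqrt disc Hdisc) as Hs. pose proof (sqrt_pos disc) as Hs0.
      assert (Hge : 0 <= ((a+d) + sqrt disc)/2).
      { assert (Habs: Rabs (a+d) <= sqrt disc).
        { rewrite <- sqrt_Rsqr_abs. apply sqrt_le_1_alt. unfold Rsqr. nra. }
        pose proof (Rle_abs (-(a+d))). rewrite Rabs_Ropp in H0. lra. }
      specialize (H (((a+d) + sqrt disc)/2, 0)).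
      assert (Re (((a + d) + sqrt disc) / 2, 0) < 0).
      { apply H. apply eig_comp. fold a b c d. split; [|ring].
        nra. }
      simpl in H0. lra.
    + exfalso.
      set (disc := (a+d)^2 - 4*(a*d-b*c)). assert (Hdef: disc = (a+d)^2 - 4*(a*d-b*c)) by reflexivity. clearbody disc.
      destruct (Rle_dec 0 disc) as [Hdisc|Hdisc].
      * pose proof (sqrt_sqrt disc Hdisc) as Hs. pose proof (sqrt_pos disc) as Hs0.
        specialize (H (((a+d) + sqrt disc)/2, 0)).
        assert (Re (((a + d) + sqrt disc) / 2, 0) < 0).
        { apply H. apply eig_comp. fold a b c d. split; [|ring].
          nra. }
        simpl in H0. lra.
      * assert (Hn : 0 <= - disc) by lra.
        pose proof (sqrt_sqrt (-disc) Hn) as Hs.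
        specialize (H ((a+d)/2, sqrt (-disc) / 2)).
        assert (Re ((a + d) / 2, sqrt (- disc) / 2) < 0).
        { apply H. apply eig_comp. fold a b c d. split; [|field].
          nra. }
        simpl in H0. lra.
    + exfalso.
      set (disc := (a+d)^2 - 4*(a*d-b*c)). assert (Hdef: disc = (a+d)^2 - 4*(a*d-b*c)) by reflexivity. clearbody disc.
      assert (Hdisc : 0 <= disc) by (nra).
      pose proof (sqrt_sqrt disc Hdisc) as Hs. pose proof (sqrt_pos disc) as Hs0.
      specialize (H (((a+d) + sqrt disc)/2, 0)).
      assert (Re (((a + d) + sqrt disc) / 2, 0) < 0).
      { apply H. apply eig_comp. fold a b c d. split; [|ring].
        nra. }
      simpl in H0. lra.
  - intros [Ht Hd] [x y] Hl. apply eig_comp in Hl. fold a b c d in Hl.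
    destruct Hl as [H1 H2]. simpl.
    assert (Hy : y * (a + d - 2*x) = 0) by lra.
    apply Rmult_integral in Hy. destruct Hy as [Hy|Hy].
    + subst y. nra.
    + lra.
Qed.

Definition Pm M V x2 i j := -2 * gg M V i j x2 + (nn M V i 0 * nn M V 0 j + nn M V i 1 * nn M V 1 j).

Section T.
Variables (M V : R) (hM : 0 < M) (hV : 0 < V).

Lemma tr0 : Pm M V 0 0 0 + Pm M V 0 1 1 = - 400 * V^2 * Rpoly1 M V / (10500*V^2*M)^2.
Proof. unfold Pm, gg, nn, Rpoly1. field. split; lra. Qed.

Lemma det0 : Pm M V 0 0 0 * Pm M V 0 1 1 - Pm M V 0 0 1 * Pm M V 0 1 0
  = 17640000 * V^4 * Rpoly2 M V / (10500*V^2*M)^4.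
Proof. unfold Pm, gg, nn, Rpoly2. field. split; lra. Qed.

Lemma tr1 x2 : Rpoly4 M V <> 0 -> x2^2 = 5 * Rpoly3 M V / (M * Rpoly4 M V) ->
  Pm M V x2 0 0 + Pm M V x2 1 1 = 400 * V^2 * Rpoly5 M V / (Rpoly4 M V * (10500*V^2*M)^2).
Proof. intros h4 hs. unfold Pm, gg, nn. rewrite hs. unfold Rpoly3, Rpoly4, Rpoly5 in *. field. repeat split; lra. Qed.

Lemma det1 x2 : Rpoly4 M V <> 0 -> x2^2 = 5 * Rpoly3 M V / (M * Rpoly4 M V) ->
  Pm M V x2 0 0 * Pm M V x2 1 1 - Pm M V x2 0 1 * Pm M V x2 1 0
  = - 17640000 * V^4 * Rpoly6 M V / (Rpoly4 M V * (10500*V^2*M)^4).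
Proof. intros h4 hs. unfold Pm, gg, nn. rewrite hs. unfold Rpoly3, Rpoly4, Rpoly6 in *. field. repeat split; lra. Qed.
End T.

Lemma count (Q : vec -> Prop) (o p q : vec) (A B : Prop) :
 (B -> p <> q /\ p <> o /\ q <> o) ->
 (forall x, Q x <-> (x = o /\ A) \/ (B /\ (x = p \/ x = q))) ->
 (exactly_one Q <-> A /\ ~B) /\ (exactly_two Q <-> ~A /\ B).
Proof.
  intros Hd HQ.
  assert (Qo : A -> Q o) by (intros; apply HQ; left; auto).
  assert (Qp : B -> Q p) by (intros; apply HQ; right; auto).
  assert (Qq : B -> Q q) by (intros; apply HQ; right; auto).
  destruct (classic A) as [HA|HA]; destruct (classic B) as [HB|HB];
  split; split; intros H.
  - exfalso. destruct (Hd HB) as [d1 [d2 d3]]. destruct H as [a [_ Ha]].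
    pose proof (Ha o (Qo HA)); pose proof (Ha p (Qp HB)). congruence.
  - tauto.
  - exfalso. destruct (Hd HB) as [d1 [d2 d3]]. destruct H as [a [b [_ [_ [_ Hab]]]]].
    destruct (Hab o (Qo HA)); destruct (Hab p (Qp HB)); destruct (Hab q (Qq HB)); congruence.
  - tauto.
  - tauto.
  - exists o. split; auto. intros b Hb. apply HQ in Hb. tauto.
  - exfalso. destruct H as [a [b [hab [Ha [Hb _]]]]].
    apply HQ in Ha; apply HQ in Hb. destruct Ha as [[Ha _]|[]]; destruct Hb as [[Hb _]|[]]; try tauto. congruence.
  - tauto.
  - exfalso. destruct (Hd HB) as [d1 [d2 d3]]. destruct H as [a [Ha Hb]].
    pose proof (Hb p (Qp HB)); pose proof (Hb q (Qq HB)). congruence.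
  - tauto.
  - tauto.
  - destruct (Hd HB) as [d1 [d2 d3]]. exists p, q. split; auto. split; auto. split; auto.
    intros c Hc. apply HQ in Hc. tauto.
  - exfalso. destruct H as [a [Ha _]]. apply HQ in Ha. tauto.
  - tauto.
  - exfalso. destruct H as [a [b [_ [Ha _]]]]. apply HQ in Ha. tauto.
  - tauto.
Qed.

Lemma pos_div_iff (a k : R) : 0 < k -> (0 < a / k <-> 0 < a).
Proof.
  intros hk. split; intros h.
  - replace a with ((a / k) * k) by (field; lra). apply Rmult_lt_0_compat; lra.
  - unfold Rdiv. apply Rmult_lt_0_compat; [lra|]. apply Rinv_0_lt_compat; lra.
Qed.

Lemma sign_frac (a k : R) : k <> 0 ->
  (0 < a / k <-> (0 < a /\ 0 < k) \/ (a < 0 /\ k < 0)) /\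
  (a / k < 0 <-> (a < 0 /\ 0 < k) \/ (0 < a /\ k < 0)).
Proof.
  intros hk. destruct (Rlt_dec 0 k) as [hp|hn].
  - pose proof (pos_div_iff a k hp). pose proof (pos_div_iff (-a) k hp).
    replace (-a/k) with (-(a/k)) in H0 by (field; lra). split; split; intros; lra.
  - assert (hn' : 0 < -k) by lra.
    pose proof (pos_div_iff a (-k) hn'). pose proof (pos_div_iff (-a) (-k) hn').
    replace (a/(-k)) with (-(a/k)) in H by (field; lra).
    replace (-a/(-k)) with (a/k) in H0 by (field; lra). split; split; intros; lra.
Qed.

Definition hh M V x2 := -(6*V^2*M^2*x2^3 - 6000*M*x2^3 + 30*V^2*x2 - 300*M*x2)/(1200*M).
Definition s0 M V := 5 * Rpoly3 M V / (M * Rpoly4 M V).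

Lemma fp_iff M V x1 x2 : 0 < M -> 0 < V -> Rpoly4 M V <> 0 ->
  fixed_point M V (x1, x2) <-> x1 = hh M V x2 /\ (x2 = 0 \/ x2^2 = s0 M V).
Proof.
  intros hM hV h4.
  unfold fixed_point, Defs.G, G1, G2. cbn beta iota zeta delta [fst snd Nat.eqb].
  assert (hd1 : 2100 * V^2 * M <> 0) by (apply Rgt_not_eq; apply Rmult_lt_0_compat; nra).
  assert (hd2 : 5250 * V^2 * M <> 0) by (apply Rgt_not_eq; apply Rmult_lt_0_compat; nra).
  set (n1 := 6 * V ^ 2 * M ^ 2 * x2 ^ 3 - 6000 * M * x2 ^ 3 + 30 * V ^ 2 * x2 + 30 * V ^ 2 * 0 +
      19 * V ^ 2 * 0 + 240 * V * M * 0 - 60 * V * M * 0 + 1200 * M * x1 - 300 * M * x2).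
  set (n2 := 18 * V ^ 2 * M ^ 2 * x2 ^ 3 - 60000 * M * x2 ^ 3 + 90 * V ^ 2 * x2 + 90 * V ^ 2 * 0 +
      85 * V ^ 2 * 0 + 300 * V * M * 0 - 600 * V * M * 0 + 1500 * M * x1 - 3000 * M * x2).
  assert (e1 : n1 / (2100 * V^2 * M) = 0 <-> n1 = 0).
  { split; intro h. - replace n1 with (n1 / (2100 * V^2 * M) * (2100 * V^2 * M)) by (field; repeat split; lra).
      rewrite h; ring. - rewrite h. unfold Rdiv. ring. }
  assert (e2 : - (n2 / (5250 * V^2 * M)) = 0 <-> n2 = 0).
  { split; intro h. - replace n2 with (- (- (n2 / (5250 * V^2 * M))) * (5250 * V^2 * M)) by (field; repeat split; lra).
      rewrite h; ring. - rewrite h. unfold Rdiv. ring. }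
  rewrite e1, e2.
  assert (hx1 : n1 = 0 <-> x1 = hh M V x2).
  { unfold n1, hh. split; intro h.
    - apply (Rmult_eq_reg_l (1200*M)); [|nra]. field_simplify; [lra|repeat split; lra].
    - rewrite h. field. lra. }
  assert (key : n2 = 5/4 * n1 + x2 * (21/2 * M * Rpoly4 M V * x2^2 - 105/2 * Rpoly3 M V)).
  { unfold n1, n2, Rpoly3, Rpoly4. field. }
  assert (hs : 21/2 * M * Rpoly4 M V * x2^2 - 105/2 * Rpoly3 M V = 0 <-> x2^2 = s0 M V).
  { unfold s0. split; intro h.
    - apply (Rmult_eq_reg_l (M * Rpoly4 M V)); [|apply Rmult_integral_contrapositive; split; lra].
      field_simplify; [lra|repeat split; lra].
    - rewrite h. field. split; lra. }
  split.
  - intros [h1 h2]. split; [apply hx1; auto|].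
    rewrite key, h1 in h2.
    assert (h3 : x2 * (21/2 * M * Rpoly4 M V * x2^2 - 105/2 * Rpoly3 M V) = 0) by lra.
    apply Rmult_integral in h3. destruct h3 as [h3|h3]; [left; auto | right; apply hs; auto].
  - intros [h1 h2]. assert (h1' : n1 = 0) by (apply hx1; auto). split; auto.
    rewrite key, h1'. destruct h2 as [h2|h2].
    + rewrite h2. ring.
    + apply hs in h2. rewrite h2. ring.
Qed.

Ltac pos := repeat apply Rmult_le_pos; try apply pow_le; try lra.
Lemma L1 (M V : R) (hM : 0 < M) (hV : 0 < V) (h3 : 0 <= (V^2 - 50*M)) (h1 : 0 < (-9450*V^2*M - 43*V^2 + 135*V*M + 621900*M^2)) (h2: 0 < (1800*V^4*M + 1500*V^3*M^2 - 15660000*V^2*M^3 + 4*V^4 + 20*V^3*M - 123675*V^2*M^2 + 297000*V*M^3 + 769590000*M^4)) : False.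
Proof.
assert (F0 : 0 <= V^1) by pos.
assert (F1 : 0 <= V^2) by pos.
assert (F2 : 0 <= V^3) by pos.
assert (F3 : 0 <= V^4) by pos.
assert (F4 : 0 <= V^5) by pos.
assert (F5 : 0 <= V^6) by pos.
assert (F6 : 0 <= V^7) by pos.
assert (F7 : 0 <= V^8) by pos.
assert (F8 : 0 <= M^1) by pos.
assert (F9 : 0 <= M^1 * V^1) by pos.
assert (F10 : 0 <= M^1 * V^2) by pos.
assert (F11 : 0 <= M^1 * V^3) by pos.
assert (F12 : 0 <= M^1 * V^4) by pos.
assert (F13 : 0 <= M^1 * V^5) by pos.
assert (F14 : 0 <= M^1 * V^6) by pos.
assert (F15 : 0 <= M^1 * V^7) by pos.
assert (F16 : 0 <= M^1 * V^8) by pos.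
assert (F17 : 0 <= M^2) by pos.
assert (F18 : 0 <= M^2 * V^1) by pos.
assert (F19 : 0 <= M^2 * V^2) by pos.
assert (F20 : 0 <= M^2 * V^3) by pos.
assert (F21 : 0 <= M^2 * V^4) by pos.
assert (F22 : 0 <= M^2 * V^5) by pos.
assert (F23 : 0 <= M^2 * V^6) by pos.
assert (F24 : 0 <= M^2 * V^7) by pos.
assert (F25 : 0 <= M^2 * V^8) by pos.
assert (F26 : 0 <= M^3) by pos.
assert (F27 : 0 <= M^3 * V^1) by pos.
assert (F28 : 0 <= M^3 * V^2) by pos.
assert (F29 : 0 <= M^3 * V^3) by pos.
assert (F30 : 0 <= M^3 * V^4) by pos.
assert (F31 : 0 <= M^3 * V^5) by pos.
assert (F32 : 0 <= M^3 * V^6) by pos.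
assert (F33 : 0 <= M^3 * V^7) by pos.
assert (F34 : 0 <= M^3 * V^8) by pos.
assert (F35 : 0 <= M^4) by pos.
assert (F36 : 0 <= M^4 * V^1) by pos.
assert (F37 : 0 <= M^4 * V^2) by pos.
assert (F38 : 0 <= M^4 * V^3) by pos.
assert (F39 : 0 <= M^4 * V^4) by pos.
assert (F40 : 0 <= M^4 * V^5) by pos.
assert (F41 : 0 <= M^4 * V^6) by pos.
assert (F42 : 0 <= M^4 * V^7) by pos.
assert (F43 : 0 <= M^4 * V^8) by pos.
assert (F44 : 0 <= M^5) by pos.
assert (F45 : 0 <= M^5 * V^1) by pos.
assert (F46 : 0 <= M^5 * V^2) by pos.
assert (F47 : 0 <= M^5 * V^3) by pos.
assert (F48 : 0 <= M^5 * V^4) by pos.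
assert (F49 : 0 <= M^5 * V^5) by pos.
assert (F50 : 0 <= M^5 * V^6) by pos.
assert (F51 : 0 <= M^5 * V^7) by pos.
assert (F52 : 0 <= M^5 * V^8) by pos.
assert (F53 : 0 <= (1800*V^4*M + 1500*V^3*M^2 - 15660000*V^2*M^3 + 4*V^4 + 20*V^3*M - 123675*V^2*M^2 + 297000*V*M^3 + 769590000*M^4)^1) by pos.
assert (F54 : 0 <= V^1 * (1800*V^4*M + 1500*V^3*M^2 - 15660000*V^2*M^3 + 4*V^4 + 20*V^3*M - 123675*V^2*M^2 + 297000*V*M^3 + 769590000*M^4)^1) by pos.
assert (F55 : 0 <= V^2 * (1800*V^4*M + 1500*V^3*M^2 - 15660000*V^2*M^3 + 4*V^4 + 20*V^3*M - 123675*V^2*M^2 + 297000*V*M^3 + 769590000*M^4)^1) by pos.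
assert (F56 : 0 <= V^3 * (1800*V^4*M + 1500*V^3*M^2 - 15660000*V^2*M^3 + 4*V^4 + 20*V^3*M - 123675*V^2*M^2 + 297000*V*M^3 + 769590000*M^4)^1) by pos.
assert (F57 : 0 <= V^4 * (1800*V^4*M + 1500*V^3*M^2 - 15660000*V^2*M^3 + 4*V^4 + 20*V^3*M - 123675*V^2*M^2 + 297000*V*M^3 + 769590000*M^4)^1) by pos.
assert (F58 : 0 <= M^1 * (1800*V^4*M + 1500*V^3*M^2 - 15660000*V^2*M^3 + 4*V^4 + 20*V^3*M - 123675*V^2*M^2 + 297000*V*M^3 + 769590000*M^4)^1) by pos.
assert (F59 : 0 <= M^1 * V^1 * (1800*V^4*M + 1500*V^3*M^2 - 15660000*V^2*M^3 + 4*V^4 + 20*V^3*M - 123675*V^2*M^2 + 297000*V*M^3 + 769590000*M^4)^1) by pos.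
assert (F60 : 0 <= M^1 * V^2 * (1800*V^4*M + 1500*V^3*M^2 - 15660000*V^2*M^3 + 4*V^4 + 20*V^3*M - 123675*V^2*M^2 + 297000*V*M^3 + 769590000*M^4)^1) by pos.
assert (F61 : 0 <= M^1 * V^3 * (1800*V^4*M + 1500*V^3*M^2 - 15660000*V^2*M^3 + 4*V^4 + 20*V^3*M - 123675*V^2*M^2 + 297000*V*M^3 + 769590000*M^4)^1) by pos.
assert (F62 : 0 <= M^1 * V^4 * (1800*V^4*M + 1500*V^3*M^2 - 15660000*V^2*M^3 + 4*V^4 + 20*V^3*M - 123675*V^2*M^2 + 297000*V*M^3 + 769590000*M^4)^1) by pos.
assert (F63 : 0 <= (-9450*V^2*M - 43*V^2 + 135*V*M + 621900*M^2)^1) by pos.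
assert (F64 : 0 <= V^1 * (-9450*V^2*M - 43*V^2 + 135*V*M + 621900*M^2)^1) by pos.
assert (F65 : 0 <= V^2 * (-9450*V^2*M - 43*V^2 + 135*V*M + 621900*M^2)^1) by pos.
assert (F66 : 0 <= V^3 * (-9450*V^2*M - 43*V^2 + 135*V*M + 621900*M^2)^1) by pos.
assert (F67 : 0 <= V^4 * (-9450*V^2*M - 43*V^2 + 135*V*M + 621900*M^2)^1) by pos.
assert (F68 : 0 <= V^5 * (-9450*V^2*M - 43*V^2 + 135*V*M + 621900*M^2)^1) by pos.
assert (F69 : 0 <= V^6 * (-9450*V^2*M - 43*V^2 + 135*V*M + 621900*M^2)^1) by pos.
assert (F70 : 0 <= M^1 * (-9450*V^2*M - 43*V^2 + 135*V*M + 621900*M^2)^1) by pos.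
assert (F71 : 0 <= M^1 * V^1 * (-9450*V^2*M - 43*V^2 + 135*V*M + 621900*M^2)^1) by pos.
assert (F72 : 0 <= M^1 * V^2 * (-9450*V^2*M - 43*V^2 + 135*V*M + 621900*M^2)^1) by pos.
assert (F73 : 0 <= M^1 * V^3 * (-9450*V^2*M - 43*V^2 + 135*V*M + 621900*M^2)^1) by pos.
assert (F74 : 0 <= M^1 * V^4 * (-9450*V^2*M - 43*V^2 + 135*V*M + 621900*M^2)^1) by pos.
assert (F75 : 0 <= M^1 * V^5 * (-9450*V^2*M - 43*V^2 + 135*V*M + 621900*M^2)^1) by pos.
assert (F76 : 0 <= M^1 * V^6 * (-9450*V^2*M - 43*V^2 + 135*V*M + 621900*M^2)^1) by pos.
assert (F77 : 0 <= M^2 * (-9450*V^2*M - 43*V^2 + 135*V*M + 621900*M^2)^1) by pos.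
assert (F78 : 0 <= M^2 * V^1 * (-9450*V^2*M - 43*V^2 + 135*V*M + 621900*M^2)^1) by pos.
assert (F79 : 0 <= M^2 * V^2 * (-9450*V^2*M - 43*V^2 + 135*V*M + 621900*M^2)^1) by pos.
assert (F80 : 0 <= M^2 * V^3 * (-9450*V^2*M - 43*V^2 + 135*V*M + 621900*M^2)^1) by pos.
assert (F81 : 0 <= M^2 * V^4 * (-9450*V^2*M - 43*V^2 + 135*V*M + 621900*M^2)^1) by pos.
assert (F82 : 0 <= M^2 * V^5 * (-9450*V^2*M - 43*V^2 + 135*V*M + 621900*M^2)^1) by pos.
assert (F83 : 0 <= M^2 * V^6 * (-9450*V^2*M - 43*V^2 + 135*V*M + 621900*M^2)^1) by pos.
assert (F84 : 0 <= M^3 * (-9450*V^2*M - 43*V^2 + 135*V*M + 621900*M^2)^1) by pos.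
assert (F85 : 0 <= M^3 * V^1 * (-9450*V^2*M - 43*V^2 + 135*V*M + 621900*M^2)^1) by pos.
assert (F86 : 0 <= M^3 * V^2 * (-9450*V^2*M - 43*V^2 + 135*V*M + 621900*M^2)^1) by pos.
assert (F87 : 0 <= M^3 * V^3 * (-9450*V^2*M - 43*V^2 + 135*V*M + 621900*M^2)^1) by pos.
assert (F88 : 0 <= M^3 * V^4 * (-9450*V^2*M - 43*V^2 + 135*V*M + 621900*M^2)^1) by pos.
assert (F89 : 0 <= M^3 * V^5 * (-9450*V^2*M - 43*V^2 + 135*V*M + 621900*M^2)^1) by pos.
assert (F90 : 0 <= M^3 * V^6 * (-9450*V^2*M - 43*V^2 + 135*V*M + 621900*M^2)^1) by pos.
assert (F91 : 0 <= (-9450*V^2*M - 43*V^2 + 135*V*M + 621900*M^2)^2) by pos.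
assert (F92 : 0 <= V^1 * (-9450*V^2*M - 43*V^2 + 135*V*M + 621900*M^2)^2) by pos.
assert (F93 : 0 <= V^2 * (-9450*V^2*M - 43*V^2 + 135*V*M + 621900*M^2)^2) by pos.
assert (F94 : 0 <= V^3 * (-9450*V^2*M - 43*V^2 + 135*V*M + 621900*M^2)^2) by pos.
assert (F95 : 0 <= V^4 * (-9450*V^2*M - 43*V^2 + 135*V*M + 621900*M^2)^2) by pos.
assert (F96 : 0 <= M^1 * (-9450*V^2*M - 43*V^2 + 135*V*M + 621900*M^2)^2) by pos.
assert (F97 : 0 <= M^1 * V^1 * (-9450*V^2*M - 43*V^2 + 135*V*M + 621900*M^2)^2) by pos.
assert (F98 : 0 <= M^1 * V^2 * (-9450*V^2*M - 43*V^2 + 135*V*M + 621900*M^2)^2) by pos.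
assert (F99 : 0 <= M^1 * V^3 * (-9450*V^2*M - 43*V^2 + 135*V*M + 621900*M^2)^2) by pos.
assert (F100 : 0 <= M^1 * V^4 * (-9450*V^2*M - 43*V^2 + 135*V*M + 621900*M^2)^2) by pos.
assert (F101 : 0 <= (V^2 - 50*M)^1) by pos.
assert (F102 : 0 <= V^1 * (V^2 - 50*M)^1) by pos.
assert (F103 : 0 <= V^2 * (V^2 - 50*M)^1) by pos.
assert (F104 : 0 <= V^3 * (V^2 - 50*M)^1) by pos.
assert (F105 : 0 <= V^4 * (V^2 - 50*M)^1) by pos.
assert (F106 : 0 <= V^5 * (V^2 - 50*M)^1) by pos.
assert (F107 : 0 <= V^6 * (V^2 - 50*M)^1) by pos.
assert (F108 : 0 <= M^1 * (V^2 - 50*M)^1) by pos.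
assert (F109 : 0 <= M^1 * V^1 * (V^2 - 50*M)^1) by pos.
assert (F110 : 0 <= M^1 * V^2 * (V^2 - 50*M)^1) by pos.
assert (F111 : 0 <= M^1 * V^3 * (V^2 - 50*M)^1) by pos.
assert (F112 : 0 <= M^1 * V^4 * (V^2 - 50*M)^1) by pos.
assert (F113 : 0 <= M^1 * V^5 * (V^2 - 50*M)^1) by pos.
assert (F114 : 0 <= M^1 * V^6 * (V^2 - 50*M)^1) by pos.
assert (F115 : 0 <= M^2 * (V^2 - 50*M)^1) by pos.
assert (F116 : 0 <= M^2 * V^1 * (V^2 - 50*M)^1) by pos.
assert (F117 : 0 <= M^2 * V^2 * (V^2 - 50*M)^1) by pos.
assert (F118 : 0 <= M^2 * V^3 * (V^2 - 50*M)^1) by pos.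
assert (F119 : 0 <= M^2 * V^4 * (V^2 - 50*M)^1) by pos.
assert (F120 : 0 <= M^2 * V^5 * (V^2 - 50*M)^1) by pos.
assert (F121 : 0 <= M^2 * V^6 * (V^2 - 50*M)^1) by pos.
assert (F122 : 0 <= M^3 * (V^2 - 50*M)^1) by pos.
assert (F123 : 0 <= M^3 * V^1 * (V^2 - 50*M)^1) by pos.
assert (F124 : 0 <= M^3 * V^2 * (V^2 - 50*M)^1) by pos.
assert (F125 : 0 <= M^3 * V^3 * (V^2 - 50*M)^1) by pos.
assert (F126 : 0 <= M^3 * V^4 * (V^2 - 50*M)^1) by pos.
assert (F127 : 0 <= M^3 * V^5 * (V^2 - 50*M)^1) by pos.
assert (F128 : 0 <= M^3 * V^6 * (V^2 - 50*M)^1) by pos.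
assert (F129 : 0 <= M^4 * (V^2 - 50*M)^1) by pos.
assert (F130 : 0 <= M^4 * V^1 * (V^2 - 50*M)^1) by pos.
assert (F131 : 0 <= M^4 * V^2 * (V^2 - 50*M)^1) by pos.
assert (F132 : 0 <= M^4 * V^3 * (V^2 - 50*M)^1) by pos.
assert (F133 : 0 <= M^4 * V^4 * (V^2 - 50*M)^1) by pos.
assert (F134 : 0 <= M^4 * V^5 * (V^2 - 50*M)^1) by pos.
assert (F135 : 0 <= M^4 * V^6 * (V^2 - 50*M)^1) by pos.
assert (F136 : 0 <= (V^2 - 50*M)^1 * (1800*V^4*M + 1500*V^3*M^2 - 15660000*V^2*M^3 + 4*V^4 + 20*V^3*M - 123675*V^2*M^2 + 297000*V*M^3 + 769590000*M^4)^1) by pos.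
assert (F137 : 0 <= V^1 * (V^2 - 50*M)^1 * (1800*V^4*M + 1500*V^3*M^2 - 15660000*V^2*M^3 + 4*V^4 + 20*V^3*M - 123675*V^2*M^2 + 297000*V*M^3 + 769590000*M^4)^1) by pos.
assert (F138 : 0 <= V^2 * (V^2 - 50*M)^1 * (1800*V^4*M + 1500*V^3*M^2 - 15660000*V^2*M^3 + 4*V^4 + 20*V^3*M - 123675*V^2*M^2 + 297000*V*M^3 + 769590000*M^4)^1) by pos.
assert (F139 : 0 <= (V^2 - 50*M)^1 * (-9450*V^2*M - 43*V^2 + 135*V*M + 621900*M^2)^1) by pos.
assert (F140 : 0 <= V^1 * (V^2 - 50*M)^1 * (-9450*V^2*M - 43*V^2 + 135*V*M + 621900*M^2)^1) by pos.
assert (F141 : 0 <= V^2 * (V^2 - 50*M)^1 * (-9450*V^2*M - 43*V^2 + 135*V*M + 621900*M^2)^1) by pos.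
assert (F142 : 0 <= V^3 * (V^2 - 50*M)^1 * (-9450*V^2*M - 43*V^2 + 135*V*M + 621900*M^2)^1) by pos.
assert (F143 : 0 <= V^4 * (V^2 - 50*M)^1 * (-9450*V^2*M - 43*V^2 + 135*V*M + 621900*M^2)^1) by pos.
assert (F144 : 0 <= M^1 * (V^2 - 50*M)^1 * (-9450*V^2*M - 43*V^2 + 135*V*M + 621900*M^2)^1) by pos.
assert (F145 : 0 <= M^1 * V^1 * (V^2 - 50*M)^1 * (-9450*V^2*M - 43*V^2 + 135*V*M + 621900*M^2)^1) by pos.
assert (F146 : 0 <= M^1 * V^2 * (V^2 - 50*M)^1 * (-9450*V^2*M - 43*V^2 + 135*V*M + 621900*M^2)^1) by pos.
assert (F147 : 0 <= M^1 * V^3 * (V^2 - 50*M)^1 * (-9450*V^2*M - 43*V^2 + 135*V*M + 621900*M^2)^1) by pos.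
assert (F148 : 0 <= M^1 * V^4 * (V^2 - 50*M)^1 * (-9450*V^2*M - 43*V^2 + 135*V*M + 621900*M^2)^1) by pos.
assert (F149 : 0 <= M^2 * (V^2 - 50*M)^1 * (-9450*V^2*M - 43*V^2 + 135*V*M + 621900*M^2)^1) by pos.
assert (F150 : 0 <= M^2 * V^1 * (V^2 - 50*M)^1 * (-9450*V^2*M - 43*V^2 + 135*V*M + 621900*M^2)^1) by pos.
assert (F151 : 0 <= M^2 * V^2 * (V^2 - 50*M)^1 * (-9450*V^2*M - 43*V^2 + 135*V*M + 621900*M^2)^1) by pos.
assert (F152 : 0 <= M^2 * V^3 * (V^2 - 50*M)^1 * (-9450*V^2*M - 43*V^2 + 135*V*M + 621900*M^2)^1) by pos.
assert (F153 : 0 <= M^2 * V^4 * (V^2 - 50*M)^1 * (-9450*V^2*M - 43*V^2 + 135*V*M + 621900*M^2)^1) by pos.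
assert (F154 : 0 <= (V^2 - 50*M)^1 * (-9450*V^2*M - 43*V^2 + 135*V*M + 621900*M^2)^2) by pos.
assert (F155 : 0 <= V^1 * (V^2 - 50*M)^1 * (-9450*V^2*M - 43*V^2 + 135*V*M + 621900*M^2)^2) by pos.
assert (F156 : 0 <= V^2 * (V^2 - 50*M)^1 * (-9450*V^2*M - 43*V^2 + 135*V*M + 621900*M^2)^2) by pos.
assert (F157 : 0 <= (V^2 - 50*M)^2) by pos.
assert (F158 : 0 <= V^1 * (V^2 - 50*M)^2) by pos.
assert (F159 : 0 <= V^2 * (V^2 - 50*M)^2) by pos.
assert (F160 : 0 <= V^3 * (V^2 - 50*M)^2) by pos.
assert (F161 : 0 <= V^4 * (V^2 - 50*M)^2) by pos.
assert (F162 : 0 <= M^1 * (V^2 - 50*M)^2) by pos.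
assert (F163 : 0 <= M^1 * V^1 * (V^2 - 50*M)^2) by pos.
assert (F164 : 0 <= M^1 * V^2 * (V^2 - 50*M)^2) by pos.
assert (F165 : 0 <= M^1 * V^3 * (V^2 - 50*M)^2) by pos.
assert (F166 : 0 <= M^1 * V^4 * (V^2 - 50*M)^2) by pos.
assert (F167 : 0 <= M^2 * (V^2 - 50*M)^2) by pos.
assert (F168 : 0 <= M^2 * V^1 * (V^2 - 50*M)^2) by pos.
assert (F169 : 0 <= M^2 * V^2 * (V^2 - 50*M)^2) by pos.
assert (F170 : 0 <= M^2 * V^3 * (V^2 - 50*M)^2) by pos.
assert (F171 : 0 <= M^2 * V^4 * (V^2 - 50*M)^2) by pos.
assert (F172 : 0 <= M^3 * (V^2 - 50*M)^2) by pos.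
assert (F173 : 0 <= M^3 * V^1 * (V^2 - 50*M)^2) by pos.
assert (F174 : 0 <= M^3 * V^2 * (V^2 - 50*M)^2) by pos.
assert (F175 : 0 <= M^3 * V^3 * (V^2 - 50*M)^2) by pos.
assert (F176 : 0 <= M^3 * V^4 * (V^2 - 50*M)^2) by pos.
assert (F177 : 0 <= (V^2 - 50*M)^2 * (-9450*V^2*M - 43*V^2 + 135*V*M + 621900*M^2)^1) by pos.
assert (F178 : 0 <= V^1 * (V^2 - 50*M)^2 * (-9450*V^2*M - 43*V^2 + 135*V*M + 621900*M^2)^1) by pos.
assert (F179 : 0 <= V^2 * (V^2 - 50*M)^2 * (-9450*V^2*M - 43*V^2 + 135*V*M + 621900*M^2)^1) by pos.
assert (F180 : 0 <= M^1 * (V^2 - 50*M)^2 * (-9450*V^2*M - 43*V^2 + 135*V*M + 621900*M^2)^1) by pos.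
assert (F181 : 0 <= M^1 * V^1 * (V^2 - 50*M)^2 * (-9450*V^2*M - 43*V^2 + 135*V*M + 621900*M^2)^1) by pos.
assert (F182 : 0 <= M^1 * V^2 * (V^2 - 50*M)^2 * (-9450*V^2*M - 43*V^2 + 135*V*M + 621900*M^2)^1) by pos.
lra.
Qed.

Lemma L2a_pos (r a w : R) : 0 <= r -> 0 < a -> 0 <= w -> 0 < w * ((30381040653804207037503631410339/11920928955078125000)*r^0 + (12281351334110902908598454474/11920928955078125)*r^1 + (179012325258034363457655449/953674316406250)*r^2 + (387858262380650086003498/19073486328125)*r^3 + (4436728490032435285279/3051757812500)*r^4 + (10967071043894948459/152587890625)*r^5 + (3047272307375596/1220703125)*r^6 + (2946895292468/48828125)*r^7 + (15237638931/15625000)*r^8 + (744969/78125)*r^9 + (1341/31250)*r^10) + a^1 * ((8806792212545126036463024292169/2384185791015625000)*r^0 + (71716352051646819052838189849/2384185791015625)*r^1 + (941861295379741305572129022/95367431640625)*r^2 + (5582604398624023241108003/3814697265625)*r^3 + (77727083103612847645639/610351562500)*r^4 + (219108645410375283039/30517578125)*r^5 + (133192954546183617/488281250)*r^6 + (68414288759333/9765625)*r^7 + (367247119941/3125000)*r^8 + (18253404/15625)*r^9 + (32661/6250)*r^10) + a^2 * ((1280390411196700052775890533/3814697265625000)*r^0 + (22009310290415397515090473/76293945312500)*r^1 + (367728841048434208161979/6103515625000)*r^2 + (370216009733335173853/61035156250)*r^3 + (691945745949754567/1953125000)*r^4 + (2502490045606001/195312500)*r^5 + (4477315858389/15625000)*r^6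 + (286089507/78125)*r^7 + (63981/3125)*r^8) + a^3 * ((11780230389751782206703/6103515625000)*r^0 + (52121852714807346363/61035156250)*r^1 + (107949419607519357/976562500)*r^2 + (133142725663857/19531250)*r^3 + (714602050419/3125000)*r^4 + (319615329/78125)*r^5 + (95301/3125)*r^6) + a^4 * ((9303130950564231/2441406250)*r^0 + (44229405376143/48828125)*r^1 + (118689027678/1953125)*r^2 + (141555753/78125)*r^3 + (126621/6250)*r^4) + a^5 * ((49353561621/19531250)*r^0 + (88289019/390625)*r^1 + (157941/31250)*r^2).
Proof. intros hr ha hw.
assert (F0 : 0 <= w * r^0) by (repeat apply Rmult_le_pos; try apply pow_le; lra).
assert (F1 : 0 <= w * r^1) by (repeat apply Rmult_le_pos; try apply pow_le; lra).
assert (F2 : 0 <= w * r^2) by (repeat apply Rmult_le_pos; try apply pow_le; lra).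
assert (F3 : 0 <= w * r^3) by (repeat apply Rmult_le_pos; try apply pow_le; lra).
assert (F4 : 0 <= w * r^4) by (repeat apply Rmult_le_pos; try apply pow_le; lra).
assert (F5 : 0 <= w * r^5) by (repeat apply Rmult_le_pos; try apply pow_le; lra).
assert (F6 : 0 <= w * r^6) by (repeat apply Rmult_le_pos; try apply pow_le; lra).
assert (F7 : 0 <= w * r^7) by (repeat apply Rmult_le_pos; try apply pow_le; lra).
assert (F8 : 0 <= w * r^8) by (repeat apply Rmult_le_pos; try apply pow_le; lra).
assert (F9 : 0 <= w * r^9) by (repeat apply Rmult_le_pos; try apply pow_le; lra).
assert (F10 : 0 <= w * r^10) by (repeat apply Rmult_le_pos; try apply pow_le; lra).
assert (F11 : 0 <= a^1 * r^0) by (repeat apply Rmult_le_pos; try apply pow_le; lra).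
assert (F12 : 0 <= a^1 * r^1) by (repeat apply Rmult_le_pos; try apply pow_le; lra).
assert (F13 : 0 <= a^1 * r^2) by (repeat apply Rmult_le_pos; try apply pow_le; lra).
assert (F14 : 0 <= a^1 * r^3) by (repeat apply Rmult_le_pos; try apply pow_le; lra).
assert (F15 : 0 <= a^1 * r^4) by (repeat apply Rmult_le_pos; try apply pow_le; lra).
assert (F16 : 0 <= a^1 * r^5) by (repeat apply Rmult_le_pos; try apply pow_le; lra).
assert (F17 : 0 <= a^1 * r^6) by (repeat apply Rmult_le_pos; try apply pow_le; lra).
assert (F18 : 0 <= a^1 * r^7) by (repeat apply Rmult_le_pos; try apply pow_le; lra).
assert (F19 : 0 <= a^1 * r^8) by (repeat apply Rmult_le_pos; try apply pow_le; lra).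
assert (F20 : 0 <= a^1 * r^9) by (repeat apply Rmult_le_pos; try apply pow_le; lra).
assert (F21 : 0 <= a^1 * r^10) by (repeat apply Rmult_le_pos; try apply pow_le; lra).
assert (F22 : 0 <= a^2 * r^0) by (repeat apply Rmult_le_pos; try apply pow_le; lra).
assert (F23 : 0 <= a^2 * r^1) by (repeat apply Rmult_le_pos; try apply pow_le; lra).
assert (F24 : 0 <= a^2 * r^2) by (repeat apply Rmult_le_pos; try apply pow_le; lra).
assert (F25 : 0 <= a^2 * r^3) by (repeat apply Rmult_le_pos; try apply pow_le; lra).
assert (F26 : 0 <= a^2 * r^4) by (repeat apply Rmult_le_pos; try apply pow_le; lra).
assert (F27 : 0 <= a^2 * r^5) by (repeat apply Rmult_le_pos; try apply pow_le; lra).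
assert (F28 : 0 <= a^2 * r^6) by (repeat apply Rmult_le_pos; try apply pow_le; lra).
assert (F29 : 0 <= a^2 * r^7) by (repeat apply Rmult_le_pos; try apply pow_le; lra).
assert (F30 : 0 <= a^2 * r^8) by (repeat apply Rmult_le_pos; try apply pow_le; lra).
assert (F31 : 0 <= a^3 * r^0) by (repeat apply Rmult_le_pos; try apply pow_le; lra).
assert (F32 : 0 <= a^3 * r^1) by (repeat apply Rmult_le_pos; try apply pow_le; lra).
assert (F33 : 0 <= a^3 * r^2) by (repeat apply Rmult_le_pos; try apply pow_le; lra).
assert (F34 : 0 <= a^3 * r^3) by (repeat apply Rmult_le_pos; try apply pow_le; lra).
assert (F35 : 0 <= a^3 * r^4) by (repeat apply Rmult_le_pos; try apply pow_le; lra).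
assert (F36 : 0 <= a^3 * r^5) by (repeat apply Rmult_le_pos; try apply pow_le; lra).
assert (F37 : 0 <= a^3 * r^6) by (repeat apply Rmult_le_pos; try apply pow_le; lra).
assert (F38 : 0 <= a^4 * r^0) by (repeat apply Rmult_le_pos; try apply pow_le; lra).
assert (F39 : 0 <= a^4 * r^1) by (repeat apply Rmult_le_pos; try apply pow_le; lra).
assert (F40 : 0 <= a^4 * r^2) by (repeat apply Rmult_le_pos; try apply pow_le; lra).
assert (F41 : 0 <= a^4 * r^3) by (repeat apply Rmult_le_pos; try apply pow_le; lra).
assert (F42 : 0 <= a^4 * r^4) by (repeat apply Rmult_le_pos; try apply pow_le; lra).
assert (F43 : 0 <= a^5 * r^0) by (repeat apply Rmult_le_pos; try apply pow_le; lra).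
assert (F44 : 0 <= a^5 * r^1) by (repeat apply Rmult_le_pos; try apply pow_le; lra).
assert (F45 : 0 <= a^5 * r^2) by (repeat apply Rmult_le_pos; try apply pow_le; lra).
assert (S : 0 < a^5) by (apply pow_lt; lra).
lra.
Qed.
Lemma L2a_id (M V : R) : (3600*V^6*M^2 + 3000*V^5*M^3 - 31320000*V^4*M^4 - 4*V^6*M - 20*V^5*M^2 - 146325*V^4*M^3 - 522000*V^3*M^4 + 1579410000*V^2*M^5 - 4500000*V^4*M - 532500000*V^3*M^2 + 155250000000*V^2*M^3 + 20000*V^4 + 100000*V^3*M + 56625000*V^2*M^2 + 28485000000*V*M^3 - 7829550000000*M^4) = (V^2-500) * ((30381040653804207037503631410339/11920928955078125000)*(V-(559/25))^0 + (12281351334110902908598454474/11920928955078125)*(V-(559/25))^1 + (179012325258034363457655449/953674316406250)*(V-(559/25))^2 + (387858262380650086003498/19073486328125)*(V-(559/25))^3 + (4436728490032435285279/3051757812500)*(V-(559/25))^4 + (10967071043894948459/152587890625)*(V-(559/25))^5 + (3047272307375596/1220703125)*(V-(559/25))^6 + (2946895292468/48828125)*(V-(559/25))^7 + (15237638931/15625000)*(V-(559/25))^8 + (744969/78125)*(V-(559/25))^9 + (1341/31250)*(V-(559/25))^10) + (50*M-V^2)^1 * ((8806792212545126036463024292169/2384185791015625000)*(V-(559/25))^0 + (71716352051646819052838189849/2384185791015625)*(V-(559/25))^1 + (941861295379741305572129022/95367431640625)*(V-(559/25))^2 + (5582604398624023241108003/3814697265625)*(V-(559/25))^3 + (77727083103612847645639/610351562500)*(V-(559/25))^4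 + (219108645410375283039/30517578125)*(V-(559/25))^5 + (133192954546183617/488281250)*(V-(559/25))^6 + (68414288759333/9765625)*(V-(559/25))^7 + (367247119941/3125000)*(V-(559/25))^8 + (18253404/15625)*(V-(559/25))^9 + (32661/6250)*(V-(559/25))^10) + (50*M-V^2)^2 * ((1280390411196700052775890533/3814697265625000)*(V-(559/25))^0 + (22009310290415397515090473/76293945312500)*(V-(559/25))^1 + (367728841048434208161979/6103515625000)*(V-(559/25))^2 + (370216009733335173853/61035156250)*(V-(559/25))^3 + (691945745949754567/1953125000)*(V-(559/25))^4 + (2502490045606001/195312500)*(V-(559/25))^5 + (4477315858389/15625000)*(V-(559/25))^6 + (286089507/78125)*(V-(559/25))^7 + (63981/3125)*(V-(559/25))^8) + (50*M-V^2)^3 * ((11780230389751782206703/6103515625000)*(V-(559/25))^0 + (52121852714807346363/61035156250)*(V-(559/25))^1 + (107949419607519357/976562500)*(V-(559/25))^2 + (133142725663857/19531250)*(V-(559/25))^3 + (714602050419/3125000)*(V-(559/25))^4 + (319615329/78125)*(V-(559/25))^5 + (95301/3125)*(V-(559/25))^6) + (50*M-V^2)^4 * ((9303130950564231/2441406250)*(V-(559/25))^0 + (44229405376143/48828125)*(V-(559/25))^1 + (118689027678/1953125)*(V-(559/25))^2 + (141555753/78125)*(V-(559/25))^3 + (126621/6250)*(V-(559/25))^4) + (50*M-V^2)^5 * ((49353561621/19531250)*(V-(559/25))^0 + (88289019/390625)*(V-(559/25))^1 + (157941/31250)*(V-(559/25))^2).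
Proof. field. Qed.

Lemma L2b_pos (s t b w : R) : 0 < s -> 0 <= t -> 0 < b -> 0 <= w -> 0 < w * ((843750000000000000000000000000000000000/627087108533643260080674721)*s^2*t^8 + (6750000000000000000000000000000000000000/627087108533643260080674721)*s^3*t^7 + (24469453518750000000000000000000000000000/627087108533643260080674721)*s^4*t^6 + (53040854079053437500000000000000000000000/627087108533643260080674721)*s^5*t^5 + (75349967614017187500000000000000000000000/627087108533643260080674721)*s^6*t^4 + (72105136789155324756187500000000000000000/627087108533643260080674721)*s^7*t^3 + (45665049576821179104964462500000000000000/627087108533643260080674721)*s^8*t^2 + (17527009959477946441366425000000000000000/627087108533643260080674721)*s^9*t^1 + (3052451738272321172534016956332500000000/627087108533643260080674721)*s^10*t^0) + b^1 * ((1020881250000000000000000000000000000000000000000/15703331874021591272136865425150399498481)*s^2*t^12 + (12250575000000000000000000000000000000000000000000/15703331874021591272136865425150399498481)*s^3*t^11 + (67378162500000000000000000000000000000000000000000/15703331874021591272136865425150399498481)*s^4*t^10 + (224614868559221644875000000000000000000000000000000/15703331874021591272136865425150399498481)*s^5*t^9 + (504519423210323022712500000000000000000000000000000/15703331874021591272136865425150399498481)*s^6*t^8 + (801247817550604966200000000000000000000000000000000/15703331874021591272136865425150399498481)*s^7*t^7 + (916895777667108572634982596076875000000000000000000/15703331874021591272136865425150399498481)*s^8*t^6 + (754839712179204730624104734078250000000000000000000/15703331874021591272136865425150399498481)*s^9*t^5 + (437488730149884544970784729238125000000000000000000/15703331874021591272136865425150399498481)*s^10*t^4 + (169866978541680225562767500427453064912300000000000/15703331874021591272136865425150399498481)*s^11*t^3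 + (39811736802499672793216159197714636969335000000000/15703331874021591272136865425150399498481)*s^12*t^2 + (4316284481479245895640640135570079201770000000000/15703331874021591272136865425150399498481)*s^13*t^1 + (21524669561672549943025040011045444133402006076/15703331874021591272136865425150399498481)*s^14*t^0) + b^2 * ((79983000000000000000000000000000000000000/3138049868823693059154649937911849)*s^2*t^10 + (799830000000000000000000000000000000000000/3138049868823693059154649937911849)*s^3*t^9 + (3599235000000000000000000000000000000000000/3138049868823693059154649937911849)*s^4*t^8 + (9598350653993434567500000000000000000000000/3138049868823693059154649937911849)*s^5*t^7 + (16739834512742647823250000000000000000000000/3138049868823693059154649937911849)*s^6*t^6 + (19807939342593761022000000000000000000000000/3138049868823693059154649937911849)*s^7*t^5 + (15920125116560804278247462665575000000000000/3138049868823693059154649937911849)*s^8*t^4 + (8424787746932649360000673492462500000000000/3138049868823693059154649937911849)*s^9*t^3 + (2716917010093141199267244483937500000000000/3138049868823693059154649937911849)*s^10*t^2 + (446067028359003564942799207186561298246000/3138049868823693059154649937911849)*s^11*t^1 + (20891429461782978973778506876337780902400/3138049868823693059154649937911849)*s^12*t^0) + b^3 * ((23826150000000000000000000000000/280325037341816388055733)*s^2*t^7 + (166783050000000000000000000000000/280325037341816388055733)*s^3*t^6 + (500349150000000000000000000000000/280325037341816388055733)*s^4*t^5 + (833935450161362638500000000000000/280325037341816388055733)*s^5*t^4 + (822197650213099238850000000000000/280325037341816388055733)*s^6*t^3 + (465075149671121885550000000000000/280325037341816388055733)*s^7*t^2 + (131466815706863794903018227307500/280325037341816388055733)*s^8*t^1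 + (12046957062590535152182394506500/280325037341816388055733)*s^9*t^0) + b^4 * ((3165570000000000000000/25041707380561)*s^2*t^4 + (12662280000000000000000/25041707380561)*s^3*t^3 + (18993420000000000000000/25041707380561)*s^4*t^2 + (12661695656180033400000/25041707380561)*s^5*t^1 + (2380679381020862880000/25041707380561)*s^6*t^0) + b^5 * ((1579410000)*s^2*t^0).
Proof. intros hs ht hb hw.
assert (F0 : 0 <= w * s^2 * t^8) by (repeat apply Rmult_le_pos; try apply pow_le; lra).
assert (F1 : 0 <= w * s^3 * t^7) by (repeat apply Rmult_le_pos; try apply pow_le; lra).
assert (F2 : 0 <= w * s^4 * t^6) by (repeat apply Rmult_le_pos; try apply pow_le; lra).
assert (F3 : 0 <= w * s^5 * t^5) by (repeat apply Rmult_le_pos; try apply pow_le; lra).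
assert (F4 : 0 <= w * s^6 * t^4) by (repeat apply Rmult_le_pos; try apply pow_le; lra).
assert (F5 : 0 <= w * s^7 * t^3) by (repeat apply Rmult_le_pos; try apply pow_le; lra).
assert (F6 : 0 <= w * s^8 * t^2) by (repeat apply Rmult_le_pos; try apply pow_le; lra).
assert (F7 : 0 <= w * s^9 * t^1) by (repeat apply Rmult_le_pos; try apply pow_le; lra).
assert (F8 : 0 <= w * s^10 * t^0) by (repeat apply Rmult_le_pos; try apply pow_le; lra).
assert (F9 : 0 <= b^1 * s^2 * t^12) by (repeat apply Rmult_le_pos; try apply pow_le; lra).
assert (F10 : 0 <= b^1 * s^3 * t^11) by (repeat apply Rmult_le_pos; try apply pow_le; lra).
assert (F11 : 0 <= b^1 * s^4 * t^10) by (repeat apply Rmult_le_pos; try apply pow_le; lra).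
assert (F12 : 0 <= b^1 * s^5 * t^9) by (repeat apply Rmult_le_pos; try apply pow_le; lra).
assert (F13 : 0 <= b^1 * s^6 * t^8) by (repeat apply Rmult_le_pos; try apply pow_le; lra).
assert (F14 : 0 <= b^1 * s^7 * t^7) by (repeat apply Rmult_le_pos; try apply pow_le; lra).
assert (F15 : 0 <= b^1 * s^8 * t^6) by (repeat apply Rmult_le_pos; try apply pow_le; lra).
assert (F16 : 0 <= b^1 * s^9 * t^5) by (repeat apply Rmult_le_pos; try apply pow_le; lra).
assert (F17 : 0 <= b^1 * s^10 * t^4) by (repeat apply Rmult_le_pos; try apply pow_le; lra).
assert (F18 : 0 <= b^1 * s^11 * t^3) by (repeat apply Rmult_le_pos; try apply pow_le; lra).
assert (F19 : 0 <= b^1 * s^12 * t^2) by (repeat apply Rmult_le_pos; try apply pow_le; lra).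
assert (F20 : 0 <= b^1 * s^13 * t^1) by (repeat apply Rmult_le_pos; try apply pow_le; lra).
assert (F21 : 0 <= b^1 * s^14 * t^0) by (repeat apply Rmult_le_pos; try apply pow_le; lra).
assert (F22 : 0 <= b^2 * s^2 * t^10) by (repeat apply Rmult_le_pos; try apply pow_le; lra).
assert (F23 : 0 <= b^2 * s^3 * t^9) by (repeat apply Rmult_le_pos; try apply pow_le; lra).
assert (F24 : 0 <= b^2 * s^4 * t^8) by (repeat apply Rmult_le_pos; try apply pow_le; lra).
assert (F25 : 0 <= b^2 * s^5 * t^7) by (repeat apply Rmult_le_pos; try apply pow_le; lra).
assert (F26 : 0 <= b^2 * s^6 * t^6) by (repeat apply Rmult_le_pos; try apply pow_le; lra).
assert (F27 : 0 <= b^2 * s^7 * t^5) by (repeat apply Rmult_le_pos; try apply pow_le; lra).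
assert (F28 : 0 <= b^2 * s^8 * t^4) by (repeat apply Rmult_le_pos; try apply pow_le; lra).
assert (F29 : 0 <= b^2 * s^9 * t^3) by (repeat apply Rmult_le_pos; try apply pow_le; lra).
assert (F30 : 0 <= b^2 * s^10 * t^2) by (repeat apply Rmult_le_pos; try apply pow_le; lra).
assert (F31 : 0 <= b^2 * s^11 * t^1) by (repeat apply Rmult_le_pos; try apply pow_le; lra).
assert (F32 : 0 <= b^2 * s^12 * t^0) by (repeat apply Rmult_le_pos; try apply pow_le; lra).
assert (F33 : 0 <= b^3 * s^2 * t^7) by (repeat apply Rmult_le_pos; try apply pow_le; lra).
assert (F34 : 0 <= b^3 * s^3 * t^6) by (repeat apply Rmult_le_pos; try apply pow_le; lra).
assert (F35 : 0 <= b^3 * s^4 * t^5) by (repeat apply Rmult_le_pos; try apply pow_le; lra).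
assert (F36 : 0 <= b^3 * s^5 * t^4) by (repeat apply Rmult_le_pos; try apply pow_le; lra).
assert (F37 : 0 <= b^3 * s^6 * t^3) by (repeat apply Rmult_le_pos; try apply pow_le; lra).
assert (F38 : 0 <= b^3 * s^7 * t^2) by (repeat apply Rmult_le_pos; try apply pow_le; lra).
assert (F39 : 0 <= b^3 * s^8 * t^1) by (repeat apply Rmult_le_pos; try apply pow_le; lra).
assert (F40 : 0 <= b^3 * s^9 * t^0) by (repeat apply Rmult_le_pos; try apply pow_le; lra).
assert (F41 : 0 <= b^4 * s^2 * t^4) by (repeat apply Rmult_le_pos; try apply pow_le; lra).
assert (F42 : 0 <= b^4 * s^3 * t^3) by (repeat apply Rmult_le_pos; try apply pow_le; lra).
assert (F43 : 0 <= b^4 * s^4 * t^2) by (repeat apply Rmult_le_pos; try apply pow_le; lra).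
assert (F44 : 0 <= b^4 * s^5 * t^1) by (repeat apply Rmult_le_pos; try apply pow_le; lra).
assert (F45 : 0 <= b^4 * s^6 * t^0) by (repeat apply Rmult_le_pos; try apply pow_le; lra).
assert (F46 : 0 <= b^5 * s^2 * t^0) by (repeat apply Rmult_le_pos; try apply pow_le; lra).
assert (S : 0 < b^5 * s^2) by (repeat apply Rmult_lt_0_compat; try apply pow_lt; lra).
lra.
Qed.
Lemma L2b_id (M V : R) : V^10 * (3600*V^6*M^2 + 3000*V^5*M^3 - 31320000*V^4*M^4 - 4*V^6*M - 20*V^5*M^2 - 146325*V^4*M^3 - 522000*V^3*M^4 + 1579410000*V^2*M^5 - 4500000*V^4*M - 532500000*V^3*M^2 + 155250000000*V^2*M^3 + 20000*V^4 + 100000*V^3*M + 56625000*V^2*M^2 + 28485000000*V*M^3 - 7829550000000*M^4) = (500-V^2) * ((843750000000000000000000000000000000000/627087108533643260080674721)*V^2*((2237/100)-V)^8 + (6750000000000000000000000000000000000000/627087108533643260080674721)*V^3*((2237/100)-V)^7 + (24469453518750000000000000000000000000000/627087108533643260080674721)*V^4*((2237/100)-V)^6 + (53040854079053437500000000000000000000000/627087108533643260080674721)*V^5*((2237/100)-V)^5 + (75349967614017187500000000000000000000000/627087108533643260080674721)*V^6*((2237/100)-V)^4 + (72105136789155324756187500000000000000000/627087108533643260080674721)*V^7*((2237/100)-V)^3 + (45665049576821179104964462500000000000000/627087108533643260080674721)*V^8*((2237/100)-V)^2 + (17527009959477946441366425000000000000000/627087108533643260080674721)*V^9*((2237/100)-V)^1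 + (3052451738272321172534016956332500000000/627087108533643260080674721)*V^10*((2237/100)-V)^0) + (V^2*M-5000)^1 * ((1020881250000000000000000000000000000000000000000/15703331874021591272136865425150399498481)*V^2*((2237/100)-V)^12 + (12250575000000000000000000000000000000000000000000/15703331874021591272136865425150399498481)*V^3*((2237/100)-V)^11 + (67378162500000000000000000000000000000000000000000/15703331874021591272136865425150399498481)*V^4*((2237/100)-V)^10 + (224614868559221644875000000000000000000000000000000/15703331874021591272136865425150399498481)*V^5*((2237/100)-V)^9 + (504519423210323022712500000000000000000000000000000/15703331874021591272136865425150399498481)*V^6*((2237/100)-V)^8 + (801247817550604966200000000000000000000000000000000/15703331874021591272136865425150399498481)*V^7*((2237/100)-V)^7 + (916895777667108572634982596076875000000000000000000/15703331874021591272136865425150399498481)*V^8*((2237/100)-V)^6 + (754839712179204730624104734078250000000000000000000/15703331874021591272136865425150399498481)*V^9*((2237/100)-V)^5 + (437488730149884544970784729238125000000000000000000/15703331874021591272136865425150399498481)*V^10*((2237/100)-V)^4 + (169866978541680225562767500427453064912300000000000/15703331874021591272136865425150399498481)*V^11*((2237/100)-V)^3 + (39811736802499672793216159197714636969335000000000/15703331874021591272136865425150399498481)*V^12*((2237/100)-V)^2 + (4316284481479245895640640135570079201770000000000/15703331874021591272136865425150399498481)*V^13*((2237/100)-V)^1 + (21524669561672549943025040011045444133402006076/15703331874021591272136865425150399498481)*V^14*((2237/100)-V)^0) + (V^2*M-5000)^2 * ((79983000000000000000000000000000000000000/3138049868823693059154649937911849)*V^2*((2237/100)-V)^10 + (799830000000000000000000000000000000000000/3138049868823693059154649937911849)*V^3*((2237/100)-V)^9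 + (3599235000000000000000000000000000000000000/3138049868823693059154649937911849)*V^4*((2237/100)-V)^8 + (9598350653993434567500000000000000000000000/3138049868823693059154649937911849)*V^5*((2237/100)-V)^7 + (16739834512742647823250000000000000000000000/3138049868823693059154649937911849)*V^6*((2237/100)-V)^6 + (19807939342593761022000000000000000000000000/3138049868823693059154649937911849)*V^7*((2237/100)-V)^5 + (15920125116560804278247462665575000000000000/3138049868823693059154649937911849)*V^8*((2237/100)-V)^4 + (8424787746932649360000673492462500000000000/3138049868823693059154649937911849)*V^9*((2237/100)-V)^3 + (2716917010093141199267244483937500000000000/3138049868823693059154649937911849)*V^10*((2237/100)-V)^2 + (446067028359003564942799207186561298246000/3138049868823693059154649937911849)*V^11*((2237/100)-V)^1 + (20891429461782978973778506876337780902400/3138049868823693059154649937911849)*V^12*((2237/100)-V)^0) + (V^2*M-5000)^3 * ((23826150000000000000000000000000/280325037341816388055733)*V^2*((2237/100)-V)^7 + (166783050000000000000000000000000/280325037341816388055733)*V^3*((2237/100)-V)^6 + (500349150000000000000000000000000/280325037341816388055733)*V^4*((2237/100)-V)^5 + (833935450161362638500000000000000/280325037341816388055733)*V^5*((2237/100)-V)^4 + (822197650213099238850000000000000/280325037341816388055733)*V^6*((2237/100)-V)^3 + (465075149671121885550000000000000/280325037341816388055733)*V^7*((2237/100)-V)^2 + (131466815706863794903018227307500/280325037341816388055733)*V^8*((2237/100)-V)^1 + (12046957062590535152182394506500/280325037341816388055733)*V^9*((2237/100)-V)^0) + (V^2*M-5000)^4 * ((3165570000000000000000/25041707380561)*V^2*((2237/100)-V)^4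 + (12662280000000000000000/25041707380561)*V^3*((2237/100)-V)^3 + (18993420000000000000000/25041707380561)*V^4*((2237/100)-V)^2 + (12661695656180033400000/25041707380561)*V^5*((2237/100)-V)^1 + (2380679381020862880000/25041707380561)*V^6*((2237/100)-V)^0) + (V^2*M-5000)^5 * ((1579410000)*V^2*((2237/100)-V)^0).
Proof. field. Qed.

Section Main.
Variables (M V : R) (hM : 0 < M) (hV : 0 < V).

Lemma stable_x x1 x2 : jacobi_stable M V (x1, x2) <->
  (Pm M V x2 0 0 + Pm M V x2 1 1 < 0 /\ Pm M V x2 0 0 * Pm M V x2 1 1 - Pm M V x2 0 1 * Pm M V x2 1 0 > 0).
Proof.
  unfold jacobi_stable. rewrite stable_iff. cbv beta. rewrite !P_eq; auto. unfold Pm. tauto.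
Qed.

Lemma Dpos : 0 < 10500 * V^2 * M.
Proof. apply Rmult_lt_0_compat; [|auto]. nra. Qed.

Lemma Stab0 : (Pm M V 0 0 0 + Pm M V 0 1 1 < 0 /\ Pm M V 0 0 0 * Pm M V 0 1 1 - Pm M V 0 0 1 * Pm M V 0 1 0 > 0)
  <-> Rpoly1 M V > 0 /\ Rpoly2 M V > 0.
Proof.
  rewrite tr0, det0; auto.
  pose proof Dpos as hD.
  assert (k2 : 0 < (10500 * V^2 * M)^2) by (apply pow_lt; auto).
  assert (k4 : 0 < (10500 * V^2 * M)^4) by (apply pow_lt; auto).
  destruct (sign_frac (- 400 * V^2 * Rpoly1 M V) _ (Rgt_not_eq _ _ k2)) as [_ h1].
  destruct (sign_frac (17640000 * V^4 * Rpoly2 M V) _ (Rgt_not_eq _ _ k4)) as [h2 _].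
  assert (v2 : 0 < V^2) by nra. assert (v4 : 0 < V^4) by nra.
  rewrite h1. unfold Rgt. rewrite h2. split; intros; nra.
Qed.

Definition S1c := (Rpoly4 M V < 0 /\ Rpoly5 M V > 0 /\ Rpoly6 M V > 0) \/
                  (Rpoly4 M V > 0 /\ Rpoly5 M V < 0 /\ Rpoly6 M V < 0).

Lemma Stab1 x2 : Rpoly4 M V <> 0 -> Rpoly5 M V <> 0 -> Rpoly6 M V <> 0 -> x2^2 = s0 M V ->
  (Pm M V x2 0 0 + Pm M V x2 1 1 < 0 /\ Pm M V x2 0 0 * Pm M V x2 1 1 - Pm M V x2 0 1 * Pm M V x2 1 0 > 0)
  <-> S1c.
Proof.
  intros h4 h5 h6 hs. unfold s0 in hs.
  rewrite tr1, det1; auto.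
  pose proof Dpos as hD.
  assert (k2 : 0 < (10500 * V^2 * M)^2) by (apply pow_lt; auto).
  assert (k4 : 0 < (10500 * V^2 * M)^4) by (apply pow_lt; auto).
  assert (n2 : Rpoly4 M V * (10500 * V^2 * M)^2 <> 0) by (apply Rmult_integral_contrapositive; split; lra).
  assert (n4 : Rpoly4 M V * (10500 * V^2 * M)^4 <> 0) by (apply Rmult_integral_contrapositive; split; lra).
  destruct (sign_frac (400 * V^2 * Rpoly5 M V) _ n2) as [_ h1].
  destruct (sign_frac (- 17640000 * V^4 * Rpoly6 M V) _ n4) as [h2 _].
  assert (v2 : 0 < V^2) by nra. assert (v4 : 0 < V^4) by nra.
  rewrite h1. unfold Rgt. rewrite h2. unfold S1c, Rgt.
  destruct (Rtotal_order (Rpoly4 M V) 0) as [a|[a|a]]; [|contradiction|];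
  destruct (Rtotal_order (Rpoly5 M V) 0) as [b|[b|b]]; try contradiction;
  destruct (Rtotal_order (Rpoly6 M V) 0) as [c|[c|c]]; try contradiction;
  split; intros; nra.
Qed.
End Main.

Lemma L1' M V : 0 < M -> 0 < V -> Rpoly1 M V > 0 -> Rpoly2 M V > 0 -> Rpoly3 M V > 0.
Proof.
  intros hM hV h1 h2. destruct (Rlt_dec 0 (Rpoly3 M V)) as [h|h]; [exact h|].
  exfalso. apply (L1 M V); auto; unfold Rpoly1, Rpoly2, Rpoly3 in *; lra.
Qed.

Lemma L2' M V : 0 < M -> 0 < V -> Rpoly3 M V > 0 -> Rpoly4 M V > 0 -> Rpoly6 M V > 0.
Proof.
  intros hM hV h3 h4. unfold Rpoly3, Rpoly4 in *. unfold Rgt, Rpoly6.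
  destruct (Rle_dec 500 (V^2)) as [hv|hv].
  - rewrite L2a_id. apply L2a_pos; nra.
  - assert (H : 0 < V^10 * (3600*V^6*M^2 + 3000*V^5*M^3 - 31320000*V^4*M^4 - 4*V^6*M
  - 20*V^5*M^2 - 146325*V^4*M^3 - 522000*V^3*M^4 + 1579410000*V^2*M^5
  - 4500000*V^4*M - 532500000*V^3*M^2 + 155250000000*V^2*M^3 + 20000*V^4
  + 100000*V^3*M + 56625000*V^2*M^2 + 28485000000*V*M^3 - 7829550000000*M^4)).
    { rewrite L2b_id. apply L2b_pos; nra. }
    assert (hv10 : 0 < V^10) by (apply pow_lt; auto).
    apply (Rmult_lt_reg_l (V^10)); auto. rewrite Rmult_0_r. exact H.
Qed.

Ltac sgn X := let h := fresh in let h' := fresh in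
  destruct (Rtotal_order X 0) as [h|[h|h]];
  [ assert (h' : ~ X > 0) by lra; assert (X < 0) by lra
  | exfalso; auto
  | assert (h' : ~ X < 0) by lra; assert (X > 0) by lra ].

Theorem theorem4p2 (M V : R) (hM : 0 < M) (hV : 0 < V)
  (hgen : (M - 10) * Rpoly1 M V * Rpoly2 M V * Rpoly3 M V * Rpoly4 M V * Rpoly5 M V * Rpoly6 M V <> 0) :
  (exactly_one (jacobi_stable_fp M V) <->
     (Rpoly1 M V > 0 /\ Rpoly2 M V > 0 /\ Rpoly4 M V > 0 /\ Rpoly5 M V > 0 /\ Rpoly6 M V > 0)
  \/ (Rpoly1 M V > 0 /\ Rpoly2 M V > 0 /\ Rpoly3 M V > 0 /\ Rpoly4 M V < 0)
  \/ (Rpoly1 M V > 0 /\ Rpoly2 M V > 0 /\ Rpoly3 M V > 0 /\ Rpoly4 M V > 0 /\ Rpoly5 M V < 0 /\ Rpoly6 M V > 0))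
  /\
  (exactly_two (jacobi_stable_fp M V) <->
     (Rpoly1 M V < 0 /\ Rpoly3 M V < 0 /\ Rpoly4 M V < 0 /\ Rpoly5 M V > 0 /\ Rpoly6 M V > 0)
  \/ (Rpoly1 M V > 0 /\ Rpoly2 M V < 0 /\ Rpoly3 M V < 0 /\ Rpoly4 M V < 0 /\ Rpoly5 M V > 0 /\ Rpoly6 M V > 0)).
Proof.
  assert (nz : forall a b, a * b <> 0 -> a <> 0 /\ b <> 0).
  { intros a b h. split; intro e; apply h; rewrite e; ring. }
  destruct (nz _ _ hgen) as [g h6].
  destruct (nz _ _ g) as [g' h5]. clear g.
  destruct (nz _ _ g') as [g h4]. clear g'.
  destruct (nz _ _ g) as [g' h3]. clear g.
  destruct (nz _ _ g') as [g h2]. clear g'.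
  destruct (nz _ _ g) as [_ h1]. clear g.
  set (A := Rpoly1 M V > 0 /\ Rpoly2 M V > 0).
  set (B := s0 M V > 0 /\ S1c M V).
  set (r := sqrt (s0 M V)).
  assert (Hcount : (exactly_one (jacobi_stable_fp M V) <-> A /\ ~ B) /\
                   (exactly_two (jacobi_stable_fp M V) <-> ~ A /\ B)).
  { apply (count _ (0,0) (hh M V r, r) (hh M V (-r), -r)).
    - intros [hs _]. assert (hr : 0 < r) by (apply sqrt_lt_R0; lra).
      split; [|split]; intro e; injection e; intros; lra.
    - intros [x1 x2]. unfold jacobi_stable_fp. rewrite fp_iff, stable_x; auto.
      split.
      + intros [[hx1 [hx2|hx2]] hst].
        * left. subst x2. split.
          -- rewrite hx1. unfold hh. f_equal. field. lra.
          -- apply Stab0; auto.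
        * right.
          assert (hs0 : s0 M V <> 0).
          { unfold s0. unfold Rdiv. apply Rmult_integral_contrapositive. split.
            - apply Rmult_integral_contrapositive; split; lra.
            - apply Rinv_neq_0_compat. apply Rmult_integral_contrapositive; split; lra. }
          assert (hpos : s0 M V > 0) by nra.
          split; [split; [exact hpos| apply (Stab1 M V hM hV x2); auto]|].
          assert (hr2 : r * r = s0 M V) by (apply sqrt_sqrt; lra).
          assert (hx : (x2 - r) * (x2 + r) = 0) by nra.
          apply Rmult_integral in hx. destruct hx as [hx|hx].
          -- left. assert (x2 = r) by lra. subst x2. rewrite hx1. reflexivity.
          -- right. assert (x2 = -r) by lra. subst x2. rewrite hx1. reflexivity.
      + intros [[e hA]|[[hpos hS] [e|e]]]; injection e; intros e2 e1; subst x1 x2.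
        * split; [split; [unfold hh; field; lra| left; reflexivity]|]. apply Stab0; auto.
        * assert (hr2 : r^2 = s0 M V) by (rewrite <- (sqrt_sqrt (s0 M V)); [unfold r; ring|lra]).
          split; [split; [reflexivity| right; exact hr2]|].
          apply (Stab1 M V hM hV r); auto.
        * assert (hr2 : (-r)^2 = s0 M V) by (rewrite <- (sqrt_sqrt (s0 M V)); [unfold r; ring|lra]).
          split; [split; [reflexivity| right; exact hr2]|].
          apply (Stab1 M V hM hV (-r)); auto. }
  assert (HB : B <-> ((Rpoly3 M V > 0 /\ Rpoly4 M V > 0) \/ (Rpoly3 M V < 0 /\ Rpoly4 M V < 0)) /\ S1c M V).
  { unfold B, s0.
    assert (nk : M * Rpoly4 M V <> 0) by (apply Rmult_integral_contrapositive; split; lra).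
    destruct (sign_frac (5 * Rpoly3 M V) _ nk) as [hf _]. unfold Rgt. rewrite hf.
    split; intros [hh1 hh2]; split; auto; nra. }
  pose proof (L1' M V hM hV) as HL1. pose proof (L2' M V hM hV) as HL2.
  rewrite (proj1 Hcount), (proj2 Hcount). unfold A. rewrite HB. unfold S1c.
  clear Hcount HB A B r.
  sgn (Rpoly1 M V); sgn (Rpoly2 M V); sgn (Rpoly3 M V); sgn (Rpoly4 M V); sgn (Rpoly5 M V); sgn (Rpoly6 M V);
  tauto.
Qed.
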